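(* Let $\Psi\subseteq\mathcal{K}(X)$ be a compact (with respect to the Hausdorff metric) hyperspace invariant under all $\omega_k$ with $\mathcal{F}_1(X)\subseteq\Psi$. If $(X,\mathbb{F})$ has positive topological entropy, then $(\Psi,\overline{\mathbb{F}})$ has positive topological entropy.
   Context: $(X,d)$ compact metric, $\mathbb{F}=(f_n)$ continuous self-maps, $\omega_n=f_n\circ\cdots\circ f_1$. For an open cover $\mathcal{U}$ of a compact space, $H(\mathcal{U})=\log N_{\mathcal{U}}$, $N_{\mathcal{U}}$ the minimal cardinality of a subcover; $\mathcal{U}\vee\mathcal{V}=\{U\cap V\}$; $h_{\mathbb{F},\mathcal{U}}=\limsup_{k\to\infty}\frac1k H(\mathcal{U}\vee\omega_1^{-1}(\mathcal{U})\vee\cdots\vee\omega_{k-1}^{-1}(\mathcal{U}))$ and the topological entropy $h(\mathbb{F})=\sup_{\mathcal{U}}h_{\mathbb{F},\mathcal{U}}$. $\mathcal{F}_1(X)$: singletons; $\mathcal{K}(X)$: non-empty compact subsets with Hausdorff metric; induced system $\overline{\omega}_n(A)=\omega_n(A)$, its entropy defined in the same way. *)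

(* Defs.v *)
From Stdlib Require Import Reals Lra List ClassicalEpsilon.
Open Scope R_scope.

Definition is_metric {T : Type} (d : T -> T -> R) : Prop :=
  (forall x y, 0 <= d x y) /\
  (forall x y, d x y = 0 <-> x = y) /\
  (forall x y, d x y = d y x) /\
  (forall x y z, d x z <= d x y + d y z).

Definition open_set {T : Type} (d : T -> T -> R) (U : T -> Prop) : Prop :=
  forall x, U x -> exists r, 0 < r /\ forall y, d x y < r -> U y.

Definition open_cover {T : Type} (d : T -> T -> R) (C : (T -> Prop) -> Prop) : Prop :=
  (forall U, C U -> open_set d U) /\ (forall x, exists U, C U /\ U x).

Definition finite_subcover_of {T : Type} (C : (T -> Prop) -> Prop) (A : T -> Prop)
  (l : list (T -> Prop)) : Prop :=
  (forall U, In U l -> C U) /\ (forall x, A x -> exists U, In U l /\ U x).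

Definition compact_space {T : Type} (d : T -> T -> R) : Prop :=
  forall C, open_cover d C -> exists l, finite_subcover_of C (fun _ => True) l.

Definition compact_set {T : Type} (d : T -> T -> R) (A : T -> Prop) : Prop :=
  forall C, (forall U, C U -> open_set d U) ->
    (forall x, A x -> exists U, C U /\ U x) ->
    exists l, finite_subcover_of C A l.

Definition continuous {T S : Type} (dT : T -> T -> R) (dS : S -> S -> R) (g : T -> S) : Prop :=
  forall x eps, 0 < eps -> exists delta, 0 < delta /\
    forall y, dT x y < delta -> dS (g x) (g y) < eps.

Definition subcover_card {T : Type} (C : (T -> Prop) -> Prop) (n : nat) : Prop :=
  exists l, length l = n /\ finite_subcover_of C (fun _ => True) l.

Definition min_subcover_card {T : Type} (C : (T -> Prop) -> Prop) (n : nat) : Prop :=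
  subcover_card C n /\ forall m, subcover_card C m -> (n <= m)%nat.

Definition cover_number {T : Type} (C : (T -> Prop) -> Prop) : nat :=
  epsilon (inhabits 0%nat) (min_subcover_card C).

Definition cover_entropy {T : Type} (C : (T -> Prop) -> Prop) : R :=
  ln (INR (cover_number C)).

(** C v w_1^{-1}(C) v ... v w_{k-1}^{-1}(C), where w i = omega_i (w 0 = id). *)
Definition join_cover {T : Type} (w : nat -> T -> T) (C : (T -> Prop) -> Prop) (k : nat)
  : (T -> Prop) -> Prop :=
  fun V => exists g : nat -> (T -> Prop),
    (forall i, (i < k)%nat -> C (g i)) /\
    (forall x, V x <-> forall i, (i < k)%nat -> g i (w i x)).

(** limsup_{k -> oo} a k > 0 (limsup taken in [-oo, +oo]) *)
Definition limsup_pos (a : nat -> R) : Prop :=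
  exists eps, 0 < eps /\ forall K, exists k, (K <= k)%nat /\ eps < a k.

Definition cover_entropy_pos {T : Type} (w : nat -> T -> T) (C : (T -> Prop) -> Prop) : Prop :=
  limsup_pos (fun k => cover_entropy (join_cover w C k) / INR k).

(** h(F) = sup_C h_{F,C} > 0, i.e. some open cover C has h_{F,C} > 0 *)
Definition positive_entropy {T : Type} (d : T -> T -> R) (w : nat -> T -> T) : Prop :=
  exists C, open_cover d C /\ cover_entropy_pos w C.

(** * Non-autonomous system: f n is f_n (n >= 1; f 0 unused) *)
Fixpoint omega {X : Type} (f : nat -> X -> X) (n : nat) : X -> X :=
  match n with
  | O => fun x => x
  | S m => fun x => f (S m) (omega f m x)
  end.

Definition Rsup (E : R -> Prop) : R := epsilon (inhabits 0) (fun m => is_lub E m).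

(** d(x, B) = inf_{b in B} d(x,b) *)
Definition point_set_dist {X : Type} (d : X -> X -> R) (x : X) (B : X -> Prop) : R :=
  - Rsup (fun r => exists b, B b /\ r = - d x b).

Definition hausdorff {X : Type} (d : X -> X -> R) (A B : X -> Prop) : R :=
  Rmax (Rsup (fun r => exists a, A a /\ r = point_set_dist d a B))
       (Rsup (fun r => exists b, B b /\ r = point_set_dist d b A)).

Definition in_KX {X : Type} (d : X -> X -> R) (A : X -> Prop) : Prop :=
  (exists x, A x) /\ compact_set d A.

Definition image {X : Type} (g : X -> X) (A : X -> Prop) : X -> Prop :=
  fun y => exists x, A x /\ y = g x.

(* Main.v *)
Require Import Defs.
From Stdlib Require Import Reals List ClassicalEpsilon Classical Lra Lia Arith.
Open Scope R_scope.

Lemma min_exists (P : nat -> Prop) : (exists n, P n) -> exists n, P n /\ forall m, P m -> (n <= m)%nat.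
Proof.
  intros [n Hn]. revert Hn. induction n as [n IH] using (well_founded_induction lt_wf).
  intros Hn. destruct (classic (exists m, P m /\ (m < n)%nat)) as [[m [Hm Hlt]]|Hno].
  - exact (IH m Hlt Hm).
  - exists n; split; auto. intros m Hm. destruct (Nat.le_gt_cases n m); auto.
    exfalso; apply Hno; eauto.
Qed.

Lemma cover_number_spec {T : Type} (C : (T->Prop)->Prop) :
  (exists n, subcover_card C n) -> min_subcover_card C (cover_number C).
Proof.
  intros H. destruct (min_exists _ H) as [n [Hn Hmin]]. unfold cover_number.
  apply epsilon_spec. exists n; split; auto.
Qed.

Lemma ln_mono_nat (m n : nat) : (m <= n)%nat -> ln (INR m) <= ln (INR n).
Proof.
  intros H. destruct m as [|m].
  - assert (Hl0 : ln 0 = 0) by (unfold ln; destruct (Rlt_dec _ _); [exfalso; lra|reflexivity]).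
    simpl. rewrite Hl0.
    destruct n as [|n]. simpl. lra.
    rewrite <- ln_1. destruct (Req_dec (INR (S n)) 1) as [E|E].
    + rewrite E; lra.
    + left. apply ln_increasing. lra. assert (1 <= INR (S n)) by (apply (le_INR 1); lia). lra.
  - assert (0 < INR (S m)) by (apply lt_0_INR; lia).
    apply le_INR in H. destruct (Req_dec (INR (S m)) (INR n)) as [E|E].
    + rewrite E; lra.
    + left. apply ln_increasing; lra.
Qed.

Lemma cont_comp {X : Type} (d : X -> X -> R) (g h : X -> X) :
  continuous d d g -> continuous d d h -> continuous d d (fun x => h (g x)).
Proof.
  intros Hg Hh x eps He. destruct (Hh (g x) eps He) as [d1 [Hd1 H1]].
  destruct (Hg x d1 Hd1) as [d2 [Hd2 H2]]. exists d2; split; auto.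
Qed.

Lemma omega_cont {X : Type} (d : X -> X -> R) (f : nat -> X -> X) :
  (forall n, (1 <= n)%nat -> continuous d d (f n)) -> forall n, continuous d d (omega f n).
Proof.
  intros hf n. induction n as [|n IH].
  - intros x eps He. exists eps; split; auto.
  - simpl. apply (cont_comp d (omega f n) (f (S n))); auto. apply hf; lia.
Qed.

Lemma bounded_space {X : Type} (d : X -> X -> R) (x0 : X) :
  is_metric d -> compact_space d -> exists M, forall x y, d x y <= M.
Proof.
  intros [Hpos [Hzero [Hsym Htri]]] hX.
  set (C0 := fun U : X -> Prop => exists c, forall y, U y <-> d c y < 1).
  assert (HC : open_cover d C0).
  { split.
    - intros U [c Hc] y Hy. apply Hc in Hy. exists (1 - d c y); split; [lra|].
      intros z Hz. apply Hc. specialize (Htri c y z). lra.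
    - intros x. exists (fun y => d x y < 1). split. exists x; tauto.
      assert (d x x = 0) by (apply Hzero; auto). lra. }
  destruct (hX C0 HC) as [l [Hl1 Hl2]].
  assert (Hb : forall l : list (X -> Prop), (forall U, In U l -> C0 U) ->
            exists M, forall y, (exists U, In U l /\ U y) -> d x0 y <= M).
  { intros l0. induction l0 as [|U l0 IH]; intros Hin.
    - exists 0. intros y [U [[] _]].
    - destruct IH as [M HM]. intros V HV; apply Hin; right; auto.
      destruct (Hin U (or_introl eq_refl)) as [c Hc].
      exists (Rmax (d x0 c + 1) M). intros y [V [[<-|HV] Hy]].
      + apply Hc in Hy. specialize (Htri x0 c y). pose proof (Rmax_l (d x0 c + 1) M). lra.
      + pose proof (HM y (ex_intro _ V (conj HV Hy))). pose proof (Rmax_r (d x0 c + 1) M). lra. }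
  destruct (Hb l Hl1) as [M HM].
  exists (M + M). intros x y.
  pose proof (HM x (Hl2 x I)). pose proof (HM y (Hl2 y I)).
  specialize (Htri x x0 y). rewrite (Hsym x x0) in Htri. lra.
Qed.

Lemma Rsup_lub (E : R -> Prop) :
  (exists x, E x) -> (exists M, forall x, E x -> x <= M) -> is_lub E (Rsup E).
Proof.
  intros Hne [M HM]. unfold Rsup. apply epsilon_spec.
  destruct (completeness E) as [m Hm].
  - exists M; intros x Hx; apply HM; auto.
  - exact Hne.
  - exists m; exact Hm.
Qed.

Lemma psd_lt {X : Type} (d : X -> X -> R) (a : X) (B : X -> Prop) (r : R) :
  is_metric d -> (exists b, B b) -> point_set_dist d a B < r -> exists b, B b /\ d a b < r.
Proof.
  intros [Hpos _] [b0 Hb0] Hlt. unfold point_set_dist in Hlt.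
  set (S := fun s => exists b, B b /\ s = - d a b) in *.
  assert (HS : is_lub S (Rsup S)).
  { apply Rsup_lub. exists (- d a b0); exists b0; auto.
    exists 0. intros x [b [_ ->]]. specialize (Hpos a b); lra. }
  destruct (classic (exists b, B b /\ d a b < r)) as [H|H]; auto.
  exfalso. destruct HS as [_ Hl].
  assert (Rsup S <= - r).
  { apply Hl. intros x [b [Hb ->]].
    destruct (Rlt_le_dec (d a b) r) as [E|E]. exfalso; apply H; eauto. lra. }
  lra.
Qed.

Lemma psd_bound {X : Type} (d : X -> X -> R) (a b : X) (B : X -> Prop) :
  is_metric d -> B b -> point_set_dist d a B <= d a b.
Proof.
  intros [Hpos _] Hb. unfold point_set_dist.
  set (S := fun s => exists b, B b /\ s = - d a b).
  assert (HS : is_lub S (Rsup S)).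
  { apply Rsup_lub. exists (- d a b); exists b; auto.
    exists 0. intros x [b' [_ ->]]. specialize (Hpos a b'); lra. }
  destruct HS as [Hu _]. assert (- d a b <= Rsup S) by (apply Hu; exists b; auto). lra.
Qed.

Lemma psd_le_H {X : Type} (d : X -> X -> R) (A B : X -> Prop) (a b0 : X) (M : R) :
  is_metric d -> A a -> B b0 -> (forall x y, d x y <= M) ->
  point_set_dist d a B <= hausdorff d A B.
Proof.
  intros hd Ha Hb0 HM. unfold hausdorff.
  eapply Rle_trans; [|apply Rmax_l].
  assert (HS : is_lub (fun r => exists a, A a /\ r = point_set_dist d a B)
                 (Rsup (fun r => exists a, A a /\ r = point_set_dist d a B))).
  { apply Rsup_lub. eauto. exists M. intros x [a' [_ ->]].
    eapply Rle_trans. apply (psd_bound d a' b0 B hd Hb0). apply HM. }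
  destruct HS as [Hu _]. apply Hu. eauto.
Qed.

Lemma min_radius (k : nat) (P : nat -> R -> Prop) :
  (forall i r r', 0 < r' <= r -> P i r -> P i r') ->
  (forall i, (i < k)%nat -> exists r, 0 < r /\ P i r) ->
  exists r, 0 < r /\ forall i, (i < k)%nat -> P i r.
Proof.
  intros Hmon. induction k as [|k IH]; intros H.
  - exists 1; split; [lra|]. intros i Hi; lia.
  - destruct IH as [r1 [Hr1 H1]]. intros i Hi; apply H; lia.
    destruct (H k ltac:(lia)) as [r2 [Hr2 H2]].
    exists (Rmin r1 r2). split. apply Rmin_pos; auto.
    intros i Hi. destruct (Nat.eq_dec i k) as [->|Hne].
    + apply (Hmon k r2). split. apply Rmin_pos; auto. apply Rmin_r. auto.
    + apply (Hmon i r1). split. apply Rmin_pos; auto. apply Rmin_l. apply H1; lia.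
Qed.

Lemma hit_open (X : Type) (d : X -> X -> R) (f : nat -> X -> X)
  (Psi : (X -> Prop) -> Prop)
  (hd : is_metric d) (hX : compact_space d)
  (hf : forall n, (1 <= n)%nat -> continuous d d (f n))
  (hPsiK : forall A, Psi A -> in_KX d A) (k : nat) (U : nat -> X -> Prop) :
  (forall i, (i<k)%nat -> Defs.open_set d (U i)) ->
  Defs.open_set (fun A B : {A : X -> Prop | Psi A} => hausdorff d (proj1_sig A) (proj1_sig B))
   (fun B => forall i, (i<k)%nat -> exists y, proj1_sig B y /\ U i (omega f i y)).
Proof.
  intros HU B HB.
  destruct (hPsiK _ (proj2_sig B)) as [[x0 Hx0] _].
  destruct (bounded_space d x0 hd hX) as [M HM].
  destruct (min_radius k (fun i r => exists y, proj1_sig B y /\ forall z, d y z < r -> U i (omega f i z))) as [r [Hr Hall]].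
  - intros i r r' Hrr [y [Hy Hz]]. exists y; split; auto. intros z Hdz; apply Hz; lra.
  - intros i Hi. destruct (HB i Hi) as [y [Hy Hu]]. destruct (HU i Hi _ Hu) as [e [He He']].
    destruct (omega_cont d f hf i y e He) as [del [Hdel Hc]]. exists del; split; auto.
    exists y; split; auto.
  - exists r; split; auto. intros B' HBB' i Hi. destruct (Hall i Hi) as [y [Hy Hz]].
    destruct (hPsiK _ (proj2_sig B')) as [[b0 Hb0] _].
    pose proof (psd_le_H d _ _ y b0 M hd Hy Hb0 HM).
    destruct (psd_lt d y (proj1_sig B') r hd (ex_intro _ b0 Hb0) ltac:(lra)) as [z [Hz1 Hz2]].
    exists z; split; auto.
Qed.

Lemma open_ext {T : Type} (dd : T -> T -> R) (V V' : T -> Prop) :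
  (forall B, V B <-> V' B) -> Defs.open_set dd V' -> Defs.open_set dd V.
Proof.
  intros E H x Hx. apply E in Hx. destruct (H x Hx) as [r [Hr Hr']].
  exists r; split; auto. intros y Hy; apply E; auto.
Qed.

Theorem mainTheorem16 (X : Type) (d : X -> X -> R) (f : nat -> X -> X)
  (Psi : (X -> Prop) -> Prop)
  (hd : is_metric d) (hX : compact_space d)
  (hf : forall n, (1 <= n)%nat -> continuous d d (f n))
  (hPsiK : forall A, Psi A -> in_KX d A)
  (hsing : forall x : X, Psi (fun y => y = x))
  (hinv : forall k A, Psi A -> Psi (image (omega f k) A))
  (hcomp : compact_space
             (fun A B : {A : X -> Prop | Psi A} => hausdorff d (proj1_sig A) (proj1_sig B))) :
  positive_entropy d (omega f) ->
  positive_entropy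
    (fun A B : {A : X -> Prop | Psi A} => hausdorff d (proj1_sig A) (proj1_sig B))
    (fun k (A : {A : X -> Prop | Psi A}) =>
       exist Psi (image (omega f k) (proj1_sig A)) (hinv k (proj1_sig A) (proj2_sig A))).
Proof.
  intros [C [[HCo HCc] Hpos]].
  set (W := fun k (A : {A : X -> Prop | Psi A}) =>
       exist Psi (image (omega f k) (proj1_sig A)) (hinv k (proj1_sig A) (proj2_sig A)) : {A : X -> Prop | Psi A}).
  set (dH := fun A B : {A : X -> Prop | Psi A} => hausdorff d (proj1_sig A) (proj1_sig B)).
  set (D := fun V : {A : X -> Prop | Psi A} -> Prop => exists U, C U /\ forall B, V B <-> exists y, proj1_sig B y /\ U y).
  set (Uof := fun (V : {A : X -> Prop | Psi A} -> Prop) =>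
        epsilon (inhabits (fun _ : X => True))
          (fun U => C U /\ forall B, V B <-> exists y, proj1_sig B y /\ U y)).
  assert (HUof : forall V, D V -> C (Uof V) /\ forall B, V B <-> exists y, proj1_sig B y /\ Uof V y).
  { intros V HV. unfold Uof. apply epsilon_spec. exact HV. }
  assert (Hjdesc : forall k V (g : nat -> {A : X -> Prop | Psi A} -> Prop), (forall i, (i < k)%nat -> D (g i)) ->
     (forall B, V B <-> forall i, (i < k)%nat -> g i (W i B)) ->
     forall B, V B <-> forall i, (i < k)%nat -> exists y, proj1_sig B y /\ Uof (g i) (omega f i y)).
  { intros k V g Hg HV B. rewrite HV. split.
    - intros H i Hi. destruct (HUof _ (Hg i Hi)) as [_ E]. apply E in H; auto.
      destruct H as [y [[x [Hx ->]] Hy]]. simpl in Hx. eauto.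
    - intros H i Hi. destruct (HUof _ (Hg i Hi)) as [_ E]. apply E.
      destruct (H i Hi) as [y [Hy1 Hy2]]. exists (omega f i y). split; auto.
      simpl. exists y; auto. }
  exists D. split.
  - split.
    + intros V HV. destruct HV as [U [HU E]].
      apply (open_ext dH V (fun B => forall i, (i<1)%nat -> exists y, proj1_sig B y /\ (fun _ => U) i (omega f i y))).
      * intros B. rewrite E. split.
        -- intros H i Hi. assert (i = 0%nat) by lia. subst. exact H.
        -- intros H. exact (H 0%nat ltac:(lia)).
      * apply hit_open; auto.
    + intros B. destruct (hPsiK _ (proj2_sig B)) as [[a Ha] _].
      destruct (HCc a) as [U [HU Ua]].
      exists (fun B' : {A : X -> Prop | Psi A} => exists y, proj1_sig B' y /\ U y). split.
      * exists U; split; auto; tauto.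
      * eauto.
  - unfold cover_entropy_pos, limsup_pos in *.
    destruct Hpos as [eps [He HK]]. exists eps; split; auto.
    intros K. destruct (HK (max K 1)) as [k [Hk Hlt]]. exists k; split; [lia|].
    assert (Hex : exists n, subcover_card (join_cover W D k) n).
    { destruct (hcomp (join_cover W D k)) as [l Hl].
      - split.
        + intros V [g [Hg HV]].
          apply (open_ext dH V _ (Hjdesc k V g Hg HV)).
          apply hit_open; auto. intros i Hi. apply HCo. apply (HUof _ (Hg i Hi)).
        + intros B. destruct (hPsiK _ (proj2_sig B)) as [[a Ha] _].
          set (Ua := fun i => epsilon (inhabits (fun _ : X => True)) (fun U => C U /\ U (omega f i a))).
          assert (HUa : forall i, C (Ua i) /\ Ua i (omega f i a)).
          { intros i. unfold Ua. apply epsilon_spec. apply HCc. }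
          set (g := fun i (B' : {A : X -> Prop | Psi A}) => exists y, proj1_sig B' y /\ Ua i y).
          exists (fun B' => forall i, (i < k)%nat -> g i (W i B')). split.
          * exists g. split; [|tauto]. intros i Hi. exists (Ua i). split; [apply HUa|tauto].
          * intros i Hi. exists (omega f i a). split; [|apply HUa]. simpl. exists a; auto.
      - exists (length l), l. auto. }
    pose proof (cover_number_spec _ Hex) as [[l [Hlen [Hl1 Hl2]]] _].
    set (sing := fun x : X => exist Psi (fun y => y = x) (hsing x) : {A : X -> Prop | Psi A}).
    assert (HexC : subcover_card (join_cover (omega f) C k) (cover_number (join_cover W D k))).
    { exists (map (fun V : {A : X -> Prop | Psi A} -> Prop => fun x => V (sing x)) l). split.
      - rewrite length_map; auto.
      - split.
        + intros U HU. apply in_map_iff in HU. destruct HU as [V [<- HV]].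
          destruct (Hl1 V HV) as [g [Hg HVd]].
          exists (fun i => Uof (g i)). split.
          * intros i Hi. apply (HUof _ (Hg i Hi)).
          * intros x. rewrite (Hjdesc k V g Hg HVd). split.
            -- intros H i Hi. destruct (H i Hi) as [y [Hy1 Hy2]]. simpl in Hy1. subst; auto.
            -- intros H i Hi. exists x. simpl; auto.
        + intros x _. destruct (Hl2 (sing x) I) as [V [HV HVx]].
          exists (fun x => V (sing x)). split; auto. apply in_map_iff. eauto. }
    pose proof (cover_number_spec _ (ex_intro _ _ HexC)) as [_ Hmin].
    specialize (Hmin _ HexC).
    apply ln_mono_nat in Hmin.
    unfold cover_entropy in *.
    assert (0 < INR k) by (apply lt_0_INR; lia).
    eapply Rlt_le_trans; [exact Hlt|].
    unfold Rdiv. apply Rmult_le_compat_r; [left; apply Rinv_0_lt_compat; auto|].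
    exact Hmin.
Qed.
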